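(* Let $q$ be a prime power and let $n\ge 1$, $k\ge1$ and $0\le x\le k$ be integers. Let $\mathbf{M}$ be a random $n\times k$ matrix over $\mathbb{F}_q$ whose entries are independent and uniformly distributed on $\mathbb{F}_q$ (the coding vectors of $n$ received non-systematic random linear combinations of $k$ source packets), and let $X=\{i\in\{1,\dots,k\}:\mathbf{e}_i\in\mathrm{Row}(\mathbf{M})\}$ (the set of recoverable source packets). Then $$P_{\mathrm{ns}}(|X|\ge x\mid N=n)=\frac{1}{q^{nk}}\sum_{r=x}^{\min(n,k)}\left(\sum_{i=x}^{r}\binom{k}{i}\sum_{j=0}^{k-i}(-1)^j\binom{k-i}{j}\binom{k-i-j}{r-i-j}_q\right)\prod_{\ell=0}^{r-1}(q^n-q^\ell),$$ where an empty sum equals $0$ and an empty product equals $1$.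
   Context: $\mathbf{e}_i$ denotes the $i$-th standard unit vector of $\mathbb{F}_q^k$, and $\mathrm{Row}(\mathbf{M})$ is the row space of $\mathbf{M}$. $N$ denotes the number of rows of $\mathbf{M}$. $\binom{m}{d}$ is the ordinary binomial coefficient. $\binom{m}{d}_q$ is the Gaussian binomial coefficient, i.e. the number of $d$-dimensional subspaces of an $m$-dimensional vector space over $\mathbb{F}_q$, $\binom{m}{d}_q=\prod_{i=0}^{d-1}\frac{q^{m}-q^{i}}{q^{d}-q^{i}}$ for $0\le d\le m$. By convention $\binom{m}{d}_q=0$ if $d<0$ or $d>m$. *)

(* Defs.v *)
From HB Require Import structures.
From mathcomp Require Import all_boot all_order all_algebra.
Set Implicit Arguments. Unset Strict Implicit. Unset Printing Implicit Defensive.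
Import Order.TTheory GRing.Theory Num.Theory.

Local Open Scope ring_scope.

Definition gbinom (q : nat) (m d : int) : rat :=
  if (0 <= d) && (d <= m) then
    \prod_(i < `|d|%N) (((q ^ `|m|)%:R - (q ^ i)%:R) / ((q ^ `|d|)%:R - (q ^ i)%:R))
  else 0.

Definition recoverable (F : fieldType) (n k : nat) (M : 'M[F]_(n, k)) : {set 'I_k} :=
  [set i : 'I_k | (delta_mx (0 : 'I_1) i <= M)%MS].

(* Main.v *)
Require Import Defs.
From HB Require Import structures.
From mathcomp Require Import all_boot all_order all_algebra.
From mathcomp Require Import zify ring.
Import Order.TTheory GRing.Theory Num.Theory.
Local Open Scope ring_scope.
Set Implicit Arguments. Unset Strict Implicit. Unset Printing Implicit Defensive.


Lemma sum_subsets_card (T : finType) (B : {set T}) (f : nat -> rat) :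
  \sum_(D : {set T} | D \subset B) f #|D| =
  \sum_(j < #|B|.+1) ('C(#|B|, j))%:R * f j.
Proof.
rewrite (partition_big (fun D : {set T} => (inord #|D| : 'I_(#|B|).+1)) predT) //=.
apply: eq_bigr => j _.
rewrite (eq_bigr (fun _ => f j)); last first.
  move=> D /andP[sDB /eqP <-]; rewrite inordK //; rewrite ltnS; exact: subset_leq_card.
rewrite sumr_const -cards_draws -[_ *+ #|_|]mulr_natl; congr (_%:R * _).
apply: eq_card => D; rewrite !inE unfold_in /=.
case: (boolP (D \subset B)) => sDB //=.
rewrite -val_eqE /= inordK //; rewrite ltnS; exact: subset_leq_card.

Qed.

Lemma sum_supsets (T : finType) (A Y : {set T}) (g : nat -> rat) : A \subset Y ->
  \sum_(S : {set T} | (A \subset S) && (S \subset Y)) g #|S| =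
  \sum_(j < #|Y :\: A|.+1) ('C(#|Y :\: A|, j))%:R * g (#|A| + j)%N.
Proof.
move=> sAY.
rewrite (reindex_onto (fun D => A :|: D) (fun S => S :\: A)) /=; last first.
  move=> S /andP[sAS _]; apply/setP => z; rewrite !inE.
  by case: (boolP (z \in A)) => zA //=; rewrite (subsetP sAS z zA).
rewrite -(sum_subsets_card _ (fun j => g (#|A| + j)%N)).
transitivity (\sum_(D : {set T} | D \subset Y :\: A) g #|A :|: D|).
  apply: eq_bigl => D; rewrite subsetUl subUset setDUl setDv set0U subsetD.
  rewrite (sameP eqP (setDidPl (A:=D) (B:=A))) /=.
  by rewrite sAY.
apply: eq_bigr => D; rewrite subsetD => /andP[_ dj].
by rewrite cardsU disjoint_setI0 ?cards0 ?subn0 // disjoint_sym.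
Qed.

Lemma mobius (T : finType) (A Y : {set T}) :
  \sum_(S : {set T} | (A \subset S) && (S \subset Y)) ((-1) ^+ (#|S| - #|A|) : rat)
  = (A == Y)%:R.
Proof.
case: (boolP (A \subset Y)) => sAY; last first.
  rewrite big_pred0; last first.
    move=> S; apply/negP => /andP[h1 h2]; move/negP: sAY; apply.
    exact: subset_trans h1 h2.
  by case: eqP => // e; move: sAY; rewrite e subxx.
rewrite (sum_supsets (fun s => ((-1) ^+ (s - #|A|) : rat)) sAY).
under eq_bigr => j _ do rewrite addKn.
transitivity ((1 - 1 : rat) ^+ #|Y :\: A|).
  rewrite exprBn; apply: eq_bigr => j _.
  by rewrite !expr1n !mulr1 mulr_natl.
rewrite subrr expr0n cards_eq0 setD_eq0 eq_sym eqEsubset sAY.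
by rewrite andbT.
Qed.

Lemma card_sumr (T : finType) (P : pred T) :
  (#|[set x | P x]|)%:R = \sum_(x : T) ((P x)%:R : rat).
Proof.
rewrite -sum1_card natr_sum big_mkcond /=; apply: eq_bigr => x _.
by rewrite inE; case: (P x).
Qed.

Lemma IE (T0 : finType) k (X : T0 -> {set 'I_k}) (a : nat -> rat) x :
  (forall S : {set 'I_k}, (#|[set M | S \subset X M]|)%:R = a #|S|) ->
  (#|[set M | (x <= #|X M|)%N]|)%:R =
  \sum_(i < k.+1) ('C(k, i))%:R * ((x <= i)%:R *
     \sum_(j < (k - i).+1) ('C(k - i, j))%:R * ((-1) ^+ j * a (i + j)%N)).
Proof.
move=> hA.
rewrite card_sumr.
have step1 : forall M, ((x <= #|X M|)%N%:R : rat) =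
  \sum_(T : {set 'I_k} | (x <= #|T|)%N)
     \sum_(S : {set 'I_k} | (T \subset S) && (S \subset X M)) ((-1) ^+ (#|S| - #|T|) : rat).
  move=> M; under eq_bigr => T _ do rewrite mobius.
  rewrite big_mkcond (bigD1 (X M)) //= eqxx big1 ?addr0.
    by case: (x <= #|X M|)%N.
  by move=> T ne; rewrite (negbTE ne); case: ifP.
under eq_bigr => M _ do rewrite step1.
rewrite exchange_big /=.
have step2 : forall T : {set 'I_k},
  \sum_(M : T0) \sum_(S : {set 'I_k} | (T \subset S) && (S \subset X M))
      ((-1) ^+ (#|S| - #|T|) : rat)
  = \sum_(S : {set 'I_k} | (T \subset S) && (S \subset setT)) a #|S| * (-1) ^+ (#|S| - #|T|).
  move=> T.
  under eq_bigr => M _ do rewrite big_mkcondr /=.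
  rewrite exchange_big /=; apply: eq_big => S; first by rewrite subsetT andbT.
  move=> _; rewrite -hA card_sumr mulr_suml; apply: eq_bigr => M _.
  by case: (S \subset X M); rewrite ?mul1r ?mul0r.
under eq_bigr => T _ do rewrite step2 (sum_supsets (fun s => a s * (-1) ^+ (s - #|T|)) (subsetT T)).
have hT : forall T : {set 'I_k}, #|setT :\: T| = (k - #|T|)%N.
  by move=> T; rewrite setTD cardsCs setCK card_ord.
rewrite (eq_bigr (fun T : {set 'I_k} => \sum_(j < (k - #|T|).+1) ('C(k - #|T|, j))%:R * ((-1) ^+ j * a (#|T| + j)%N))); last first.
  move=> T _; rewrite hT; apply: eq_bigr => j _.
  by rewrite [(#|T| + j - #|T|)%N]addKn [a _ * _]mulrC.
rewrite big_mkcond /=.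
transitivity (\sum_(T : {set 'I_k} | T \subset setT)
   (fun i => (((x <= i)%N)%:R : rat) * \sum_(j < (k - i).+1) ('C(k - i, j))%:R * ((-1) ^+ j * a (i + j)%N)) #|T|).
  apply: eq_big => T; first by rewrite subsetT.
  by move=> _ /=; case: (x <= #|T|)%N; rewrite ?mul1r ?mul0r.
rewrite (sum_subsets_card [set: 'I_k] (fun i => (((x <= i)%N)%:R : rat) * \sum_(j < (k - i).+1) ('C(k - i, j))%:R * ((-1) ^+ j * a (i + j)%N))).
by rewrite cardsT card_ord.
Qed.




Lemma card_subrow (F : finFieldType) a b (C : 'M[F]_(a,b)) : row_free C ->
  #|[set v : 'rV[F]_b | (v <= C)%MS]| = (#|F| ^ a)%N.
Proof.
move=> fC.
have -> : [set v : 'rV[F]_b | (v <= C)%MS] = [set w *m C | w in [set: 'rV[F]_a]].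
  apply/setP => v; rewrite inE; apply/idP/imsetP.
    by case/submxP => w ->; exists w; rewrite ?inE.
  by case=> w _ ->; apply: submxMl.
by rewrite card_imset ?cardsT ?card_mx ?mul1n //; apply: row_free_inj.
Qed.

Lemma rank_colS (F : fieldType) a b (v : 'rV[F]_b) (C : 'M[F]_(a,b)) :
  (\rank (col_mx v C) == a.+1) = (\rank C == a) && ~~ (v <= C)%MS.
Proof.
have -> : \rank (col_mx v C) = \rank (v + C)%MS by rewrite addsmxE.
have le1 := mxrank_adds_leqif v C.
have hv : (\rank v <= 1)%N by apply: rank_leq_row.
have hC : (\rank C <= a)%N by apply: rank_leq_row.
apply/idP/andP.
  move/eqP => h.
  have hC' : \rank C = a.
    apply/eqP; rewrite eqn_leq hC /=.
    have := le1.1; rewrite h => h2.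
    by move: h2 hv; lia.
  split; first by rewrite hC'.
  apply/negP => vC.
  have e : (v + C :=: C)%MS by apply/addsmx_idPr.
  by move: h; rewrite e hC'; lia.
case=> /eqP hCa vC.
have lt : (C < v + C)%MS.
  rewrite ltmxE addsmxSr /=; apply/negP => sub.
  move/negP: vC; apply; exact: submx_trans (addsmxSl v C) sub.
move: lt; rewrite ltmxErank => /andP[_]; rewrite hCa => lt.
have := le1.1; rewrite hCa => h3.
by rewrite eqn_leq lt andbT; move: h3 hv; lia.
Qed.

Lemma count_free (F : finFieldType) a b :
  (#|[set C : 'M[F]_(a,b) | \rank C == a]|)%:R =
  \prod_(l < a) (((#|F| ^ b)%:R - (#|F| ^ l)%:R) : rat).
Proof.
elim: a => [|a IH].
  rewrite big_ord0.
  have -> : [set C : 'M[F]_(0,b) | \rank C == 0%N] = setT.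
    by apply/setP => C; rewrite !inE -leqn0 rank_leq_row.
  by rewrite cardsT card_mx mul0n expn0.
rewrite card_sumr.
rewrite (reindex (fun p : 'rV[F]_b * 'M[F]_(a,b) => (col_mx p.1 p.2 : 'M[F]_(a.+1,b)))) /=; last first.
  exists (fun M : 'M[F]_(1 + a,b) => (usubmx M, dsubmx M)) => [[v C]|M] _ /=.
    by rewrite col_mxKu col_mxKd.
  by rewrite vsubmxK.
under eq_bigr => p _ do rewrite rank_colS.
rewrite -(pair_big predT predT (fun v C => (((\rank C == a) && ~~ (v <= C)%MS)%:R : rat))) /=.
rewrite exchange_big /=.
have step : forall C : 'M[F]_(a,b),
  \sum_(v : 'rV[F]_b) (((\rank C == a) && ~~ (v <= C)%MS)%:R : rat) =
  ((\rank C == a)%:R : rat) * ((#|F| ^ b)%:R - (#|F| ^ a)%:R).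
  move=> C; case: eqP => hC; last by rewrite mul0r big1.
  rewrite mul1r.
  rewrite (eq_bigr (fun v => 1 - ((v <= C)%MS)%:R)); last first.
    by move=> v _; case: (v <= C)%MS; rewrite /= ?subr0 ?subrr.
  rewrite sumrB sumr_const card_mx mul1n -card_sumr card_subrow //.
  by rewrite /row_free hC.
under eq_bigr => C _ do rewrite step.
by rewrite -mulr_suml -card_sumr IH big_ord_recr.
Qed.

Lemma count_free_tr (F : finFieldType) a b :
  (#|[set C : 'M[F]_(b,a) | \rank C == a]|)%:R =
  \prod_(l < a) (((#|F| ^ b)%:R - (#|F| ^ l)%:R) : rat).
Proof.
rewrite -count_free !card_sumr (reindex (@trmx F a b)) /=; last first.
  by exists (@trmx F b a) => M _; rewrite trmxK.
by apply: eq_bigr => C _; rewrite mxrank_tr.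
Qed.

Lemma card_under (F : finFieldType) n r k (W : 'M[F]_(r,k)) (P : pred nat) :
  row_free W ->
  #|[set B : 'M[F]_(n,k) | (B <= W)%MS && P (\rank B)]| =
  #|[set C : 'M[F]_(n,r) | P (\rank C)]|.
Proof.
move=> fW.
have -> : [set B : 'M[F]_(n,k) | (B <= W)%MS && P (\rank B)] =
          [set C *m W | C in [set C : 'M[F]_(n,r) | P (\rank C)]].
  apply/setP => B; rewrite inE; apply/andP/imsetP.
    case=> /submxP [C ->]; rewrite mxrankMfree // => PC.
    by exists C; rewrite ?inE.
  case=> C; rewrite inE => PC ->; split; first exact: submxMl.
  by rewrite mxrankMfree.
by rewrite card_imset //; apply: row_free_inj.
Qed.

Lemma fiber_count (F : finFieldType) n k (U : 'M[F]_k) :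
  (#|[set M : 'M[F]_(n,k) | <<M>>%MS == <<U>>%MS]|)%:R =
  \prod_(l < \rank U) (((#|F| ^ n)%:R - (#|F| ^ l)%:R) : rat).
Proof.
rewrite -count_free_tr.
rewrite -(card_under n (fun m => m == \rank U) (row_base_free U)).
congr (_ %:R); apply: eq_card => M; rewrite !inE.
rewrite (eq_row_base U).
apply/eqP/andP.
  move/genmxP => e; split; first by case/andP: e.
  by rewrite (eqmx_rank e).
case=> sMU rk; apply/genmxP.
by rewrite -(mxrank_leqif_eq sMU).2.
Qed.

Definition issub (F : fieldType) k (U : 'M[F]_k) := (<<U>>%MS == U).

Lemma sum_by_space (F : finFieldType) n k (Qu : pred 'M[F]_k) (f : 'M[F]_k -> rat) :
  \sum_(M : 'M[F]_(n,k)) ((Qu <<M>>%MS)%:R * f <<M>>%MS) =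
  \sum_(U : 'M[F]_k | issub U && Qu U)
     (#|[set M : 'M[F]_(n,k) | <<M>>%MS == <<U>>%MS]|)%:R * f U.
Proof.
have e1 : forall M : 'M[F]_(n,k), (Qu <<M>>%MS)%:R * f <<M>>%MS =
   \sum_(U : 'M[F]_k | issub U && Qu U) ((<<M>>%MS == U)%:R * f U).
  move=> M; case hq: (Qu <<M>>%MS).
    rewrite (bigD1 <<M>>%MS) /=; last by rewrite /issub genmx_id eqxx hq.
    rewrite eqxx big1 ?addr0 //.
    by move=> U /andP[_ ne]; rewrite eq_sym (negbTE ne) mul0r.
  rewrite mul0r big1 // => U /andP[_ qU]; case: eqP => [e|]; last by rewrite mul0r.
  by move: hq; rewrite e qU.
under eq_bigr => M _ do rewrite e1.
rewrite exchange_big /=; apply: eq_bigr => U /andP[sU _].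
rewrite -mulr_suml card_sumr; congr (_ * _); apply: eq_bigr => M _.
by move: sU; rewrite /issub => /eqP ->.
Qed.

Lemma count_sub_in (F : finFieldType) k (V : 'M[F]_k) d :
  (#|[set U : 'M[F]_k | issub U && ((U <= V)%MS && (\rank U == d))]|)%:R
    * \prod_(l < d) (((#|F| ^ d)%:R - (#|F| ^ l)%:R) : rat)
  = \prod_(l < d) (((#|F| ^ (\rank V))%:R - (#|F| ^ l)%:R) : rat).
Proof.
have h := card_under d (fun m => m == d) (row_base_free V); simpl in h.
rewrite -[RHS]count_free -h [RHS]card_sumr.
rewrite (eq_bigr (fun B => (((fun U : 'M[F]_k => (U <= V)%MS && (\rank U == d)) <<B>>%MS)%:R * 1))); last first.
  by move=> B _; rewrite mulr1 /= !genmxE (eq_row_base V).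
rewrite (sum_by_space d (fun U : 'M[F]_k => (U <= V)%MS && (\rank U == d)) (fun _ => 1)).
rewrite [RHS](eq_bigr (fun _ => \prod_(l < d) (((#|F| ^ d)%:R - (#|F| ^ l)%:R) : rat))); last first.
  by move=> U /andP[_ /= /andP[_ /eqP <-]]; rewrite mulr1 fiber_count.
rewrite sumr_const cardsE mulr_natl.
done.
Qed.

Lemma count_sub_gbinom (F : finFieldType) k (V : 'M[F]_k) d :
  (#|[set U : 'M[F]_k | issub U && ((U <= V)%MS && (\rank U == d))]|)%:R
  = gbinom #|F| (\rank V)%:Z d%:Z.
Proof.
rewrite /gbinom /= lez_nat.
case: leqP => hd; last first.
  rewrite (_ : [set U : 'M[F]_k | _] = set0) ?cards0 //; apply/setP => U; rewrite !inE.
  apply/negP => /and3P[_ sUV /eqP rU].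
  by move: (mxrankS sUV); rewrite rU leqNgt hd.
have q1 := card_finNzRing_gt1 F.
have hB : \prod_(l < d) (((#|F| ^ d)%:R - (#|F| ^ l)%:R) : rat) != 0.
  apply/prodf_neq0 => l _; rewrite subr_eq0 eqr_nat eqn_exp2l //.
  by rewrite gtn_eqF.
rewrite prodf_div -(count_sub_in V d) mulfK //.
Qed.

Lemma count_cosub (F : finFieldType) k (E V : 'M[F]_k) r :
  (E :&: V)%MS = 0 -> (1%:M <= E + V)%MS ->
  #|[set U : 'M[F]_k | issub U && ((E <= U)%MS && (\rank U == r))]| =
  #|[set W : 'M[F]_k | issub W && ((W <= V)%MS && (\rank E + \rank W == r)%N)]|.
Proof.
move=> EV0 full.
have disj : forall W : 'M[F]_k, (W <= V)%MS -> (E :&: W)%MS = 0.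
  move=> W sWV; apply/eqP; rewrite -submx0 -EV0; apply: capmxS => //.
have modU : forall U : 'M[F]_k, (E <= U)%MS -> (E + (U :&: V) :=: U)%MS.
  move=> U sEU; rewrite capmxC.
  apply: eqmx_trans (matrix_modl V sEU) _.
  apply/capmx_idPr; apply: submx_trans full; exact: submx1.
pose f (U : 'M[F]_k) := <<U :&: V>>%MS.
have rkU : forall U : 'M[F]_k, (E <= U)%MS -> \rank U = (\rank E + \rank (U :&: V))%N.
  move=> U sEU; rewrite -(mxrank_disjoint_sum (disj _ (capmxSr U V))).
  by apply: eqmx_rank; apply/eqmxP; apply: eqmx_sym; exact: modU.
rewrite -(card_in_imset (f := f)).
  congr #|pred_of_set _|; apply/setP => W; rewrite inE; apply/imsetP/idP.
    case=> U; rewrite inE => /and3P[sU sEU /eqP rU] ->.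
    by rewrite /issub /f genmx_id eqxx /= !genmxE capmxSr /= -rU (rkU U sEU).
  case/and3P => sW sWV /eqP rW.
  exists <<(E + W)%MS>>%MS.
    rewrite inE /issub genmx_id eqxx /= !genmxE addsmxSl /=.
    by rewrite mxrank_disjoint_sum ?rW // disj.
  rewrite /f; move: sW; rewrite /issub => /eqP {1}<-; apply/genmxP.
  apply/eqmxP; apply: eqmx_sym.
  apply: eqmx_trans (cap_eqmx (genmxE _) (eqmx_refl V)) _.
  rewrite addsmxC; apply: eqmx_trans (eqmx_sym (matrix_modl E sWV)) _.
  by rewrite EV0; apply: addsmx0.
move=> U1 U2; rewrite !inE => /and3P[s1 sE1 _] /and3P[s2 sE2 _] /= e.
move: s1 s2; rewrite /issub => /eqP <- /eqP <-; apply/genmxP.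
apply/eqmxP; apply: eqmx_trans (eqmx_sym (modU U1 sE1)) _.
apply: eqmx_trans _ (modU U2 sE2).
apply: adds_eqmx => //.
by apply/eqmxP/genmxP.
Qed.

Definition Es (F : fieldType) k (S : {set 'I_k}) : 'M[F]_k :=
  (\sum_(i in S) <<delta_mx (0 : 'I_1) i>>)%MS.

Lemma Es_sub (F : fieldType) k (S : {set 'I_k}) m (M : 'M[F]_(m,k)) :
  (Es F S <= M)%MS = (S \subset recoverable M).
Proof.
apply/sumsmx_subP/subsetP => h i iS.
  by rewrite inE -genmxE h.
by rewrite genmxE; move: (h i iS); rewrite inE.
Qed.

Lemma Es_rank_le (F : fieldType) k (S : {set 'I_k}) : (\rank (Es F S) <= #|S|)%N.
Proof.
rewrite /Es -sum1_card.
apply: (big_rec2 (fun (M : 'M[F]_k) c => \rank M <= c)%N) => [|i c M _ h].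
  by rewrite mxrank0.
apply: leq_trans (mxrank_adds_leqif _ _).1 _.
by rewrite genmxE mxrank_delta add1n ltnS.
Qed.

Lemma Es_props (F : fieldType) k (S : {set 'I_k}) :
  [/\ (Es F S :&: Es F (~: S))%MS = 0, (1%:M <= Es F S + Es F (~: S))%MS
    & \rank (Es F S) = #|S| ].
Proof.
have full : (1%:M <= Es F S + Es F (~: S))%MS.
  apply/row_subP => i; rewrite row1.
  case: (boolP (i \in S)) => iS.
    apply: submx_trans (addsmxSl _ _); apply: (sumsmx_sup i) => //.
    by rewrite genmxE.
  apply: submx_trans (addsmxSr _ _); apply: (sumsmx_sup i); first by rewrite inE.
  by rewrite genmxE.
have le := mxrank_adds_leqif (Es F S) (Es F (~: S)).
have h1 := Es_rank_le F S.
have h2 := Es_rank_le F (~: S).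
have hk : k = \rank (Es F S + Es F (~: S))%MS.
  apply/eqP; rewrite eqn_leq rank_leq_col /=.
  by rewrite -{1}(mxrank1 F k) mxrankS.
have hc := cardsC S; rewrite card_ord in hc.
have hsum : (\rank (Es F S + Es F (~: S))%MS == \rank (Es F S) + \rank (Es F (~: S)))%N.
  by move: le.1; rewrite -hk; lia.
split => //.
  by apply/eqP; rewrite -submx0 -le.2.
by move: le.1; rewrite -hk; lia.
Qed.

Lemma AS_count (F : finFieldType) n k (S : {set 'I_k}) :
  (#|[set M : 'M[F]_(n,k) | S \subset recoverable M]|)%:R =
  \sum_(r < k.+1) (gbinom #|F| (k%:Z - #|S|%:Z) (r%:Z - #|S|%:Z) *
                   \prod_(l < r) (((#|F| ^ n)%:R - (#|F| ^ l)%:R) : rat)).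
Proof.
have [EV0 full rkE] := Es_props F S.
rewrite card_sumr.
rewrite (eq_bigr (fun M => (((fun U : 'M[F]_k => (Es F S <= U)%MS) <<M>>%MS)%:R * 1))); last first.
  by move=> M _; rewrite mulr1 /= genmxE Es_sub.
rewrite (sum_by_space n (fun U : 'M[F]_k => (Es F S <= U)%MS) (fun _ => 1)) /=.
under eq_bigr => U _ do rewrite mulr1 fiber_count.
rewrite (partition_big (fun U : 'M[F]_k => (inord (\rank U) : 'I_k.+1)) predT) //=.
apply: eq_bigr => r _.
rewrite (eq_bigr (fun _ => \prod_(l < r) (((#|F| ^ n)%:R - (#|F| ^ l)%:R) : rat))); last first.
  move=> U /andP[_ /eqP <-]; rewrite inordK //; rewrite ltnS; exact: rank_leq_col.
rewrite sumr_const -[_ *+ #|_|]mulr_natr mulrC; congr (_ * _).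
have -> : #|(fun U : 'M[F]_k => issub U && (Es F S <= U)%MS && (inord (\rank U) == r))|
   = #|[set U : 'M[F]_k | issub U && ((Es F S <= U)%MS && (\rank U == r))]|.
  apply: eq_card => U; rewrite !inE unfold_in /= -andbA -val_eqE /= inordK //.
  rewrite ltnS; exact: rank_leq_col.
rewrite (count_cosub r EV0 full).
have hVk : \rank (Es F (~: S)) = (k - #|S|)%N.
  have [_ _ ->] := Es_props F (~: S).
  by rewrite cardsCs setCK card_ord.
have hSk : (#|S| <= k)%N by rewrite -[X in (_ <= X)%N](card_ord k) max_card.
case: (leqP #|S| r) => hr.
  have -> : (k%:Z - #|S|%:Z) = (\rank (Es F (~: S)))%:Z by rewrite hVk subzn.
  have -> : (r%:Z - #|S|%:Z) = (r - #|S|)%N%:Z by rewrite subzn.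
  rewrite -count_sub_gbinom; congr (_%:R); apply: eq_card => W; rewrite !inE rkE.
  by congr (_ && (_ && _)); apply/eqP/eqP; lia.
rewrite /gbinom.
have -> : (0 <= r%:Z - #|S|%:Z) = false.
  by apply/negbTE; rewrite -ltNge subr_lt0 ltz_nat.
rewrite andFb (_ : [set W : 'M[F]_k | _] = set0) ?cards0 //.
apply/setP => W; rewrite !inE rkE; apply/negP => /and3P[_ _ /eqP h].
by move: hr; rewrite -h; lia.
Qed.


Lemma sum_nat_ind (f : nat -> rat) a b N : (b <= N)%N ->
  \sum_(a <= i < b) f i = \sum_(i < N) ((((a <= i) && (i < b))%N)%:R * f i).
Proof.
move=> hb.
rewrite (big_nat_widen a b N) // big_geq_mkord big_mkcond /=.
apply: eq_bigr => i _; rewrite andbC.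
by case: (_ && _); rewrite ?mul1r ?mul0r.
Qed.

Lemma final_alg k n x (G : int -> int -> rat) (P : nat -> rat) :
  (x <= k)%N -> (forall mm d, d < 0 -> G mm d = 0) -> (forall r, (n < r)%N -> P r = 0) ->
  \sum_(i < k.+1) ('C(k, i))%:R * ((((x <= i)%N)%:R : rat) *
     \sum_(j < (k - i).+1) ('C(k - i, j))%:R * ((-1) ^+ j *
        \sum_(r < k.+1) (G (k%:Z - (i + j)%N%:Z) (r%:Z - (i + j)%N%:Z) * P r)))
  = \sum_(x <= r < (minn n k).+1)
      ((\sum_(x <= i < r.+1)
          ('C(k, i))%:R *
          \sum_(j < (k - i).+1)
            ((-1) ^+ j * ('C(k - i, j))%:R *
             G (k%:Z - i%:Z - j%:Z) (r%:Z - i%:Z - j%:Z)))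
       * P r).
Proof.
move=> hx hG hP.
pose term (i j r : nat) : rat := (((x <= i)%N)%:R : rat) * ('C(k, i))%:R * ('C(k - i, j))%:R
   * (-1) ^+ j * G (k%:Z - i%:Z - j%:Z) (r%:Z - i%:Z - j%:Z) * P r.
transitivity (\sum_(i < k.+1) \sum_(j < (k - i).+1) \sum_(r < k.+1) term i j r).
  apply: eq_bigr => i _; rewrite !mulr_sumr; apply: eq_bigr => j _.
  rewrite !mulr_sumr; apply: eq_bigr => r _.
  rewrite /term PoszD opprD !addrA; ring.
have hm : ((minn n k).+1 <= k.+1)%N by rewrite ltnS geq_minr.
rewrite [RHS](sum_nat_ind _ _ hm).
under [RHS]eq_bigr => r _ do rewrite (sum_nat_ind _ _ (ltn_ord r)).
under [RHS]eq_bigr => r _ do rewrite mulr_suml mulr_sumr.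
rewrite [RHS]exchange_big /=; apply: eq_bigr => i _.
under [RHS]eq_bigr => r _ do rewrite !mulr_sumr !mulr_suml !mulr_sumr.
rewrite [RHS]exchange_big /=; apply: eq_bigr => j _; apply: eq_bigr => r _.
rewrite /term.
have hr := ltn_ord r.
case: (ltnP r (i + j)) => h1.
  have hd : (r%:Z - i%:Z - j%:Z < 0) by lia.
  by rewrite (hG _ _ hd) !(mulr0, mul0r).
case: (ltnP n r) => h2; first by rewrite (hP _ h2) !mulr0.
have e1 : (r < (minn n k).+1)%N by lia.
have e2 : (i < r.+1)%N by lia.
rewrite e1 e2 !andbT.
case: (leqP x i) => hxi.
  have -> : (x <= r)%N by lia.
  rewrite /=; ring.
by rewrite /= !(mulr0, mul0r).
Qed.


Unset Implicit Arguments.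

Theorem proposition1 (F : finFieldType) (n k x : nat)
  (hn : (1 <= n)%N) (hk : (1 <= k)%N) (hx : (x <= k)%N) :
  let q := #|F| in
  ((#|[set M : 'M[F]_(n, k) | (x <= #|recoverable M|)%N]|)%:R / (q ^ (n * k))%:R : rat)
  = (1 / (q ^ (n * k))%:R) *
    \sum_(x <= r < (minn n k).+1)
      ((\sum_(x <= i < r.+1)
          ('C(k, i))%:R *
          \sum_(j < (k - i).+1)
            ((-1) ^+ j * ('C(k - i, j))%:R *
             gbinom q (k%:Z - i%:Z - j%:Z) (r%:Z - i%:Z - j%:Z)))
       * \prod_(l < r) ((q ^ n)%:R - (q ^ l)%:R))%R.
Proof.
move=> q.
pose P (r : nat) := \prod_(l < r) (((q ^ n)%:R - (q ^ l)%:R) : rat).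
pose a (s : nat) := \sum_(r < k.+1) (gbinom q (k%:Z - s%:Z) (r%:Z - s%:Z) * P r).
have hA : forall S : {set 'I_k},
    (#|[set M : 'M[F]_(n,k) | S \subset recoverable M]|)%:R = a #|S|.
  by move=> S; rewrite AS_count.
have hG : forall (mm d : int), d < 0 -> gbinom q mm d = 0.
  move=> mm d hd; rewrite /gbinom ifF //; apply/negbTE.
  by rewrite negb_and -ltNge hd.
have hP : forall r, (n < r)%N -> P r = 0.
  move=> r h2; rewrite /P (bigD1 (Ordinal h2)) //= subrr mul0r.
  done.
rewrite (IE x hA).
rewrite /a (final_alg hx hG hP).
by rewrite div1r mulrC.
Qed.
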